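(* Let $p$ be a prime and let $a_p$ be a $p$-th Fourier coefficient. Then: (a) $(p+1+a_p)(p+1-a_p)$ is a unit in $\bar{\mathbb Z}$ if and only if $p=2$ and $a_2^2=8$; (b) if $p>3$, then neither $p+1+a_p$ nor $p+1-a_p$ is a unit in $\bar{\mathbb Z}$.
   Context: $\bar{\mathbb Z}$ is the ring of algebraic integers. For a prime $p$, an element $a_p\in\bar{\mathbb Q}$ is called a $p$-th Fourier coefficient if (i) $a_p\in\bar{\mathbb Z}$, (ii) $a_p$ is totally real (its minimal polynomial over $\mathbb Q$ splits over $\mathbb R$), and (iii) $|\sigma(a_p)|\le 2\sqrt p$ for every embedding $\sigma:\mathbb Q(a_p)\hookrightarrow\mathbb R$. *)

(* Defs.v *)
From mathcomp Require Import all_boot all_order all_algebra all_field.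
Set Implicit Arguments. Unset Strict Implicit. Unset Printing Implicit Defensive.
Import Order.TTheory GRing.Theory Num.Theory.
Local Open Scope ring_scope.

(* We work in algC, the algebraic closure of Q (a model of \bar Q inside C).
   \bar Z is the subring Aint of algebraic integers. *)

Definition Aint_unit (a : algC) : Prop :=
  a \in Aint /\ exists b : algC, b \in Aint /\ a * b = 1.

Definition totally_real (a : algC) : Prop :=
  forall r : algC, root (minCpoly a) r -> r \is Num.real.

(* Embeddings Q(a) -> C are exactly the
   restrictions of field automorphisms of algC (every embedding extends),
   so condition (iii) is stated over all automorphisms nu of algC. *)
Definition fourier_coeff (p : nat) (a : algC) : Prop :=
  [/\ a \in Aint,
      totally_real a &
      forall nu : {rmorphism algC -> algC}, `|nu a| <= 2 * sqrtC p%:R].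

(* Main.v *)
From HB Require Import structures.
Require Import Defs.
From mathcomp Require Import all_boot all_order all_algebra all_field.
From mathcomp Require Import ring.
Import Order.TTheory GRing.Theory Num.Theory.
Local Open Scope ring_scope.

Lemma conj_exists (x y : algC) : root (minCpoly x) y ->
  exists nu : {rmorphism algC -> algC}, nu x = y.
Proof.
move=> ry.
have [p [Dp mon_p] min_p] := minCpolyP x.
have [r Dr] := closed_field_poly_normal (map_poly ratr p : {poly algC}).
rewrite lead_coef_map (monicP mon_p) rmorph1 scale1r in Dr.
have [Qr [QrC [rr Drr genQr]]] := num_field_exists r.
have Sinj_poly (q : {poly rat}) :
  map_poly QrC (map_poly (in_alg Qr) q) = map_poly ratr q.
  rewrite -map_poly_comp; apply: eq_map_poly => c.
  by rewrite /= rmorphZ_num rmorph1 mulr1.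
have xr : x \in r by rewrite -root_prod_XsubC -Dr -Dp root_minCpoly.
have yr : y \in r by rewrite -root_prod_XsubC -Dr -Dp.
move: xr yr; rewrite -Drr => /mapP[xx _ Ex] /mapP[yy _ Ey].
pose pr := map_poly (in_alg Qr) p.
have Qpr : pr \is a polyOver 1%VS.
  by apply/polyOverP=> i; rewrite coef_map rpredZ ?memv_line.
have prx : root pr xx by rewrite -(fmorph_root QrC) Sinj_poly -Dp -Ex root_minCpoly.
have pry : root pr yy by rewrite -(fmorph_root QrC) Sinj_poly -Dp -Ey.
have splitQr : splittingFieldFor 1 pr fullv.
  exists rr => //.
  congr (_ %= _): (eqpxx pr); apply/(map_poly_inj QrC).
  rewrite Sinj_poly Dr -Drr big_map rmorph_prod /=; apply: eq_bigr => zz _.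
  by rewrite map_polyXsubC.
have hom1 : kHom 1 (1%AS : {subfield Qr}) \1%VF by apply: kHom1.
have rmin : root (map_poly \1%VF (minPoly 1 xx)) yy.
  rewrite (kHom_poly_id hom1) ?minPolyOver //.
  have [q Dq] := polyOver1P (minPolyOver 1 xx).
  have : root (map_poly ratr q) x.
    by rewrite Ex -Sinj_poly fmorph_root -Dq root_minPoly.
  rewrite min_p => dpq.
  apply: root_dvdp pry; rewrite Dq /pr dvdp_map //.
have sub1E : (1 <= <<1%AS; xx>>)%VS by apply: sub1v.
have homE := kHomExtendP (subvv _) hom1 rmin.
have valE := kHomExtend_val hom1 rmin.
have split2 : splittingFieldFor <<1%AS; xx>>%AS pr fullv.
  by apply: splittingFieldForS splitQr => //; apply: subvf.
have [g homg Eg] := kHom_extends sub1E homE Qpr split2.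
have mm : monoid_morphism g by apply/kHom_monoid_morphism.
pose gmM := GRing.isMonoidMorphism.Build _ _ (fun_of_lfun g) mm.
pose phi : {rmorphism Qr -> Qr} := HB.pack (fun_of_lfun g) gmM.
have [nu Dnu] := extend_algC_subfield_aut QrC phi.
exists nu; rewrite Ex Ey -Dnu /=.
by rewrite -Eg ?valE // memv_adjoin.
Qed.

Lemma prod_le1 (s : seq algC) : all (fun z => `|z| < 1) s ->
  0 <= \prod_(z <- s) `|z| <= 1.
Proof.
elim: s => [|z s IH] /=; first by rewrite big_nil ler01 lexx.
case/andP=> z1 /IH /andP[h0 h1]; rewrite big_cons mulr_ge0 //=.
by rewrite mulr_ile1 // ltW.
Qed.

Lemma prod_lt1 (s : seq algC) : (0 < size s)%N -> all (fun z => `|z| < 1) s ->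
  \prod_(z <- s) `|z| < 1.
Proof.
case: s => [//|z s] _ /= /andP[z1 /prod_le1 /andP[h0 h1]].
rewrite big_cons (le_lt_trans _ z1) //.
by rewrite -{2}[`|z|]mulr1 ler_wpM2l.
Qed.

Lemma exists_big_conj (b : algC) : b \in Aint -> b != 0 ->
  exists nu : {rmorphism algC -> algC}, 1 <= `|nu b|.
Proof.
move=> Ab nz.
have [r Dr] := closed_field_poly_normal (minCpoly b).
rewrite (monicP (minCpoly_monic b)) scale1r in Dr.
case: (boolP (has (fun z => 1 <= `|z|) r)) => [/hasP[z zr z1] | /hasPn H].
  have : root (minCpoly b) z by rewrite Dr root_prod_XsubC.
  by case/conj_exists => nu Dz; exists nu; rewrite Dz.
exfalso.
have c0int : (minCpoly b)`_0 \is a Num.int.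
  by move: Ab; rewrite unfold_in => /polyOverP.
have c0nz : (minCpoly b)`_0 != 0.
  apply/negP => /eqP c0.
  have : root (minCpoly b) 0 by rewrite /root horner_coef0 c0.
  by case/conj_exists => nu /eqP; rewrite fmorph_eq0 (negbTE nz).
have := norm_intr_ge1 c0int c0nz.
rewrite -horner_coef0 Dr horner_prod normr_prod.
under eq_bigr do rewrite hornerXsubC sub0r normrN.
have rn : (0 < size r)%N.
  by have := size_minCpoly b; rewrite Dr size_prod_XsubC.
have : \prod_(z <- r) `|z| < 1.
  apply: (@prod_lt1 r rn); apply/allP => z zr; have := H z zr.
  by rewrite real_ltNge ?realE ?normr_ge0 ?ler01.
by move=> h1 h2; have := lt_le_trans h1 h2; rewrite ltxx.
Qed.

Lemma aint_unit_conj (x : algC) : Aint_unit x ->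
  exists nu : {rmorphism algC -> algC}, `|nu x| <= 1.
Proof.
case=> Ax [b [Ab xb]].
have nz : b != 0 by apply/eqP => b0; move: xb; rewrite b0 mulr0 => /eqP; rewrite eq_sym oner_eq0.
have [nu h] := @exists_big_conj b Ab nz.
exists nu.
have : `|nu x| * `|nu b| = 1 by rewrite -normrM -rmorphM xb rmorph1 normr1.
by move=> <-; apply: ler_peMr.
Qed.

Lemma sq_bound (P s t : algC) : 0 <= s -> s ^+ 2 = P -> `|t| <= 2 * s ->
  `|t| ^+ 2 <= 4%:R * P.
Proof.
move=> s0 sP ts.
have -> : 4%:R * P = (2 * s) ^+ 2 by rewrite -sP; ring.
by rewrite ler_pXn2r // ?nnegrE ?mulr_ge0 ?ler0n.
Qed.

Lemma not_unit_shift (p : nat) (c : algC) : (4 < p)%N ->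
  (forall nu : {rmorphism algC -> algC}, `|nu c| <= 2 * sqrtC p%:R) ->
  ~ Aint_unit (p%:R + 1 + c).
Proof.
move=> p4 Bc /aint_unit_conj [nu h].
rewrite !rmorphD rmorph1 rmorph_nat in h.
set s := sqrtC p%:R in Bc.
have s0 : 0 <= s by rewrite sqrtC_ge0 ler0n.
have sP : s ^+ 2 = p%:R by rewrite sqrtCK.
have h1 : p%:R + 1 - 2 * s <= `|p%:R + 1 + nu c|.
  apply: le_trans (lerB_normD _ _).
  by rewrite ger0_norm ?addr_ge0 ?ler0n ?ler01 // lerB // Bc.
have h2 : 2 * s < p%:R.
  have : (2 * s) ^+ 2 < p%:R ^+ 2.
    rewrite exprMn sP -natrX -[2 ^+ 2]natrX -natrM ltr_nat.
    by rewrite expnS expn1 ltn_pmul2r // (ltn_trans _ p4).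
  by rewrite ltr_pXn2r // ?nnegrE ?mulr_ge0 ?ler0n.
have : 1 < p%:R + 1 - 2 * s.
  by rewrite addrAC addrC ltrDl subr_gt0.
move=> h3; have := lt_le_trans h3 (le_trans h1 h); by rewrite ltxx.
Qed.

Theorem lemma2p3 (p : nat) (a : algC) :
  prime p -> fourier_coeff p a ->
  (Aint_unit ((p%:R + 1 + a) * (p%:R + 1 - a)) <-> (p = 2%N /\ a ^+ 2 = 8))
  /\ ((3 < p)%N ->
      ~ Aint_unit (p%:R + 1 + a) /\ ~ Aint_unit (p%:R + 1 - a)).
Proof.
move=> pr [Aa TR Bd].
have Rnu (nu : {rmorphism algC -> algC}) : nu a \is Num.real.
  by apply: TR; rewrite -(minCpoly_aut nu) root_minCpoly.
split; last first.
  move=> p3; have p4 : (4 < p)%N.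
    rewrite ltn_neqAle p3 andbT; apply/eqP => e; by rewrite -e in pr.
  split; first exact: not_unit_shift.
  apply: not_unit_shift p4 _ => nu; rewrite rmorphN normrN; exact: Bd.
split; last first.
  case=> -> a8; split.
  rewrite rpredM ?rpredB ?rpredD ?rpred_nat ?rpred1 //. idtac.
  exists 1; split => //; rewrite mulr1.
  have -> : (2%:R + 1 + a) * (2%:R + 1 - a) = 9%:R - a ^+ 2 :> algC by ring.
  by rewrite a8 -natrB.
move=> /aint_unit_conj [nu h].
rewrite rmorphM !rmorphB !rmorphD rmorph1 rmorph_nat in h.
have Rt := Rnu nu.
move: (Bd nu) h Rt; set t := nu a => Bt h Rt.
set s := sqrtC p%:R in Bt.
have s0 : 0 <= s by rewrite sqrtC_ge0 ler0n.
have sP : s ^+ 2 = p%:R by rewrite sqrtCK.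
have tb := @sq_bound p%:R s t s0 sP Bt.
have ey : (p%:R + 1 + t) * (p%:R + 1 - t) = (p%:R + 1)^+2 - t^+2 by ring.
rewrite ey in h.
have h1 : (p%:R+1)^+2 - 4%:R * p%:R <= `|(p%:R + 1)^+2 - t^+2|.
  apply: le_trans (lerB_dist _ _).
  by rewrite !normrX (ger0_norm (_ : 0 <= p%:R + 1)) ?addr_ge0 ?ler0n ?ler01 // lerB.
have [q Eq] : exists q, p = q.+1 by exists p.-1; rewrite prednK // prime_gt0.
have e2 : (p%:R+1)^+2 - 4%:R * p%:R = (q ^ 2)%:R :> algC.
  by rewrite Eq natrX -natr1; ring.
have hq : (q ^ 2 <= 1)%N.
  by rewrite -(ler_nat algC) -e2 (le_trans h1 h).
have p2 : p = 2%N.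
  have := prime_gt1 pr; rewrite Eq; case: q {Eq e2} hq => [|[|q]] //.
split=> //.
move: h tb; rewrite p2 real_normK // => h tb.
have e9 : ((2%N)%:R + 1 : algC) ^+ 2 = 9%:R by rewrite natr1 -natrX.
rewrite e9 in h.
have t8 : t ^+ 2 <= 8%:R by move: tb; rewrite -natrM.
rewrite ger0_norm in h; last first.
  by rewrite subr_ge0 (le_trans t8) // ler_nat.
have t8' : t ^+ 2 = 8%:R.
  apply/le_anti; rewrite t8 /=.
  move: h; rewrite lerBlDr -lerBlDl.
  by rewrite -natr1 addrK.
by apply/eqP; rewrite -(inj_eq (fmorph_inj nu)) rmorphXn rmorph_nat -/t t8'.
Qed.
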